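(* An integral smooth character $\theta:L^\times\to\overline{\mathbb Q}_\ell^\times$ lies in strongly general position if and only if its reduction $r_\ell(\theta):L^\times\to\overline{\mathbb F}_\ell^\times$ lies in strongly general position.
   Context: $K$ non-archimedean local field of residue characteristic $p$; $L/K$ unramified of degree $n$ with maximal ideal $\mathfrak p_L$; $\ell\ne p$. $T^1=1+\mathfrak p_L$. A smooth character is in strongly general position if its restriction to $T^1$ has trivial stabilizer in $\mathrm{Gal}(L/K)$ acting by precomposition. $\theta$ is integral if it takes values in $\overline{\mathbb Z}_\ell^\times$; $r_\ell(\theta)$ is its composite with $\overline{\mathbb Z}_\ell\to\overline{\mathbb F}_\ell$. *)

(* Defs.v *)
From HB Require Import structures.
From mathcomp Require Import all_boot all_order all_algebra.
Set Implicit Arguments. Unset Strict Implicit. Unset Printing Implicit Defensive.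
Import Order.TTheory GRing.Theory Num.Theory.
Local Open Scope ring_scope.

(* A normalized discrete valuation v : L^x ->> Z (the value at 0 is junk;
   0 is always treated separately, with v 0 = +oo by convention). *)
Definition normalized_dvaluation (L : fieldType) (v : L -> int) : Prop :=
  [/\ forall x y : L, x != 0 -> y != 0 -> v (x * y) = v x + v y,
      forall x y : L, x != 0 -> y != 0 -> x + y != 0 ->
        Num.min (v x) (v y) <= v (x + y)
    & forall n : int, exists x : L, x != 0 /\ v x = n].

(* x \in p_L^m  (for m = 0 this is the valuation ring O_L) *)
Definition in_pow (L : fieldType) (v : L -> int) (m : int) (x : L) : bool :=
  (x == 0) || (m <= v x).

Definition v_complete (L : fieldType) (v : L -> int) : Prop :=
  forall u : nat -> L,
    (forall m : nat, exists N : nat, forall i j : nat, (N <= i)%N -> (N <= j)%N ->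
        in_pow v m%:Z (u i - u j)) ->
    exists l : L, forall m : nat, exists N : nat, forall i : nat, (N <= i)%N ->
        in_pow v m%:Z (u i - l).

Definition finite_residue_char (L : fieldType) (v : L -> int) (p : nat) : Prop :=
  in_pow v 1 (p%:R : L) /\
  exists s : seq L, all (in_pow v 0) s /\
    forall x : L, in_pow v 0 x -> exists2 y, y \in s & in_pow v 1 (x - y).

Definition nonarch_local_field (L : fieldType) (v : L -> int) (p : nat) : Prop :=
  [/\ prime p, normalized_dvaluation v, v_complete v & finite_residue_char v p].

Definition ext_degree (K L : fieldType) (iota : {rmorphism K -> L}) (n : nat) : Prop :=
  exists b : 'I_n -> L, forall x : L,
    exists c : 'I_n -> K, (x = \sum_(i < n) iota (c i) * b i) /\
      forall c' : 'I_n -> K, x = \sum_(i < n) iota (c' i) * b i -> c' =1 c.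

Definition unramified (K L : fieldType) (iota : {rmorphism K -> L})
    (vK : K -> int) (vL : L -> int) : Prop :=
  forall a : K, a != 0 -> vL (iota a) = vK a.

Definition in_Gal (K L : fieldType) (iota : {rmorphism K -> L})
    (s : {rmorphism L -> L}) : Prop :=
  bijective s /\ forall a : K, s (iota a) = iota a.

Definition in_T1 (L : fieldType) (v : L -> int) (x : L) : bool := in_pow v 1 (x - 1).

(* a character L^x -> M^x (values on 0 are irrelevant) *)
Definition character (L M : fieldType) (chi : L -> M) : Prop :=
  (forall x y : L, x != 0 -> y != 0 -> chi (x * y) = chi x * chi y) /\
  (forall x : L, x != 0 -> chi x != 0).

(* smooth: the kernel is open, i.e. contains some U_L^m = 1 + p_L^m *)
Definition smooth_character (L M : fieldType) (v : L -> int) (chi : L -> M) : Prop :=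
  character chi /\
  exists m : nat, forall x : L, x != 0 -> in_pow v m%:Z (x - 1) -> chi x = 1.

Definition strongly_general_position (K L M : fieldType)
    (iota : {rmorphism K -> L}) (v : L -> int) (chi : L -> M) : Prop :=
  forall s : {rmorphism L -> L}, in_Gal iota s ->
    (forall x : L, in_T1 v x -> chi (s x) = chi x) -> s =1 id.

(* Abstract model of (Qlbar, Zlbar, r_l : Zlbar ->> Flbar):
   C algebraically closed of characteristic 0, O a valuation ring of C,
   r : O ->> F a surjective ring morphism whose kernel is the maximal
   ideal of O, F algebraically closed of characteristic l. *)
Definition ell_adic_coeffs (C F : closedFieldType) (O : {pred C})
    (r : C -> F) (ell : nat) : Prop :=
  [/\ [pchar C] =i pred0, ell \in [pchar F],
      [/\ 1 \in O, forall x y, x \in O -> y \in O -> x - y \in O,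
          forall x y, x \in O -> y \in O -> x * y \in O
        & forall x : C, x != 0 -> (x \in O) || (x^-1 \in O)],
      [/\ r 1 = 1, forall x y, x \in O -> y \in O -> r (x + y) = r x + r y
        & forall x y, x \in O -> y \in O -> r (x * y) = r x * r y]
    &
      (forall z : F, exists2 x, x \in O & r x = z) /\
      (forall x, x \in O -> (r x == 0) = ((x == 0) || (x^-1 \notin O)))].

Definition integral_character (L C : fieldType) (O : {pred C}) (chi : L -> C) : Prop :=
  forall x : L, x != 0 -> (chi x \in O) && ((chi x)^-1 \in O).

(* Main.v *)
Require Import Defs.
From HB Require Import structures.
From mathcomp Require Import all_boot all_order all_algebra zify.
From Stdlib Require Import Classical IndefiniteDescription.
Set Implicit Arguments. Unset Strict Implicit. Unset Printing Implicit Defensive.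
Import Order.TTheory GRing.Theory Num.Theory.
Local Open Scope ring_scope.


Lemma dv1 (L : fieldType) (v : L -> int) : normalized_dvaluation v -> v 1 = 0.
Proof.
case=> hM _ _; have := hM 1 1 (oner_neq0 _) (oner_neq0 _).
rewrite mulr1 => h; lia.
Qed.

Lemma dvN1 (L : fieldType) (v : L -> int) : normalized_dvaluation v -> v (-1) = 0.
Proof.
move=> hv; have h1 := dv1 hv; case: hv => hM _ _.
have n1 : (-1 : L) != 0 by rewrite oppr_eq0 oner_neq0.
have := hM _ _ n1 n1; rewrite mulrNN mulr1 h1 => h; lia.
Qed.

Lemma dvN (L : fieldType) (v : L -> int) (x : L) : normalized_dvaluation v -> x != 0 ->
  v (- x) = v x.
Proof.
move=> hv hx; have h1 := dvN1 hv; case: hv => hM _ _.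
have n1 : (-1 : L) != 0 by rewrite oppr_eq0 oner_neq0.
by rewrite -mulN1r hM // h1 add0r.
Qed.

Lemma dvV (L : fieldType) (v : L -> int) (x : L) : normalized_dvaluation v -> x != 0 ->
  v (x^-1) = - v x.
Proof.
move=> hv hx; have h1 := dv1 hv; case: hv => hM _ _.
have := hM _ _ hx (invr_neq0 hx); rewrite mulfV // h1 => h; lia.
Qed.

Lemma in_pow0 (L : fieldType) (v : L -> int) m : in_pow v m 0.
Proof. by rewrite /in_pow eqxx. Qed.

Lemma in_pow_self (L : fieldType) (v : L -> int) x : in_pow v (v x) x.
Proof. by rewrite /in_pow lexx orbT. Qed.

Lemma in_pow_le (L : fieldType) (v : L -> int) a b x : a <= b -> in_pow v b x -> in_pow v a x.
Proof. by move=> ab; rewrite /in_pow; case/orP=> [->//|h]; rewrite (le_trans ab h) orbT. Qed.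

Lemma in_powN (L : fieldType) (v : L -> int) m x : normalized_dvaluation v ->
  in_pow v m x -> in_pow v m (- x).
Proof.
move=> hv; rewrite /in_pow oppr_eq0; case: (eqVneq x 0) => //= hx.
by rewrite dvN.
Qed.

Lemma in_powD (L : fieldType) (v : L -> int) m x y : normalized_dvaluation v ->
  in_pow v m x -> in_pow v m y -> in_pow v m (x + y).
Proof.
move=> hv; rewrite /in_pow; case: (eqVneq x 0) => [->|hx]; first by rewrite add0r.
case: (eqVneq y 0) => [->|hy]; first by rewrite addr0 (negPf hx).
case: (eqVneq (x + y) 0) => //= hxy hmx hmy.
case: hv => _ hU _; have := hU _ _ hx hy hxy.
by apply: le_trans; rewrite le_min hmx hmy.
Qed.

Lemma in_powB (L : fieldType) (v : L -> int) m x y : normalized_dvaluation v ->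
  in_pow v m x -> in_pow v m y -> in_pow v m (x - y).
Proof. by move=> hv hx hy; apply: in_powD => //; apply: in_powN. Qed.

Lemma in_powM (L : fieldType) (v : L -> int) a b x y : normalized_dvaluation v ->
  in_pow v a x -> in_pow v b y -> in_pow v (a + b) (x * y).
Proof.
move=> hv; rewrite /in_pow mulf_eq0; case: (eqVneq x 0) => //= hx.
case: (eqVneq y 0) => //= hy ha hb.
by case: hv => hM _ _; rewrite hM // lerD.
Qed.

Lemma in_pow_sum (L : fieldType) (v : L -> int) m (I : Type) (r : seq I) (P : pred I)
  (F : I -> L) : normalized_dvaluation v ->
  (forall i, P i -> in_pow v m (F i)) -> in_pow v m (\sum_(i <- r | P i) F i).
Proof.
move=> hv hF; apply: (big_ind (in_pow v m)); first exact: in_pow0.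
  by move=> x y; apply: in_powD.
exact: hF.
Qed.

Lemma in_pow1 (L : fieldType) (v : L -> int) : normalized_dvaluation v -> in_pow v 0 1.
Proof. by move=> hv; rewrite /in_pow (dv1 hv) lexx orbT. Qed.

Lemma in_pow_nat (L : fieldType) (v : L -> int) n : normalized_dvaluation v ->
  in_pow v 0 (n%:R : L).
Proof.
move=> hv; elim: n => [|n ih]; first exact: in_pow0.
by rewrite mulrS; apply: in_powD => //; apply: in_pow1.
Qed.

Lemma in_powX (L : fieldType) (v : L -> int) a x k : normalized_dvaluation v ->
  in_pow v a x -> in_pow v (a *+ k) (x ^+ k).
Proof.
move=> hv hx; elim: k => [|k ih]; first by rewrite expr0; apply: in_pow1.
by rewrite exprSr mulrSr; apply: in_powM.
Qed.

Lemma in_pow_all (L : fieldType) (v : L -> int) x :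
  (forall m : nat, in_pow v m%:Z x) -> x = 0.
Proof.
move=> h; apply/eqP; have := h (`|v x|%N.+1); rewrite /in_pow.
case: eqP => //= _; lia.
Qed.


Lemma fin_bound (T : finType) (P : T -> nat -> Prop) :
  (forall t n n', (n <= n')%N -> P t n -> P t n') ->
  (forall t, exists n, P t n) -> exists n, forall t, P t n.
Proof.
move=> mono h; have [f hf] := fin_all_exists h.
exists (\max_t f t)%N => t; apply: (mono t (f t)) => //; exact: leq_bigmax.
Qed.

Lemma pstep (L : fieldType) (v : L -> int) (p : nat) (a : int) (z : L) :
  normalized_dvaluation v -> prime p -> in_pow v 1 (p%:R : L) -> 1 <= a ->
  in_pow v a z -> in_pow v (a + 1) ((1 + z) ^+ p - 1).
Proof.
move=> hv pp hp ha hz; rewrite [1 + z]addrC exprD1n big_ord_recl /= expr0 bin0 mulr1n [1 + _]addrC addrK.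

apply: in_pow_sum => // i _; rewrite /bump /= add1n.
have hi : (i.+1 <= p)%N := ltn_ord i.
have hzi := in_powX (i.+1) hv hz.
case: (ltnP i.+1 p) => hlt.
  have hd := prime_dvd_bin pp (hlt : (0 < i.+1 < p)%N).
  rewrite -mulr_natr -(divnK hd) natrM mulrA.
  apply: (in_pow_le (b := (a *+ i.+1 + 0) + 1)); last first.
    by apply: in_powM => //; apply: in_powM => //; apply: in_pow_nat.
  rewrite addr0 lerD2r mulrS; have : 0 <= a *+ i by apply: mulrn_wge0; lia.
  lia.
have ep : i.+1 = p by apply/eqP; rewrite eqn_leq hi hlt.
rewrite {2}ep binn mulr1n.
apply: (in_pow_le (b := a *+ i.+1)) => //.
have p2 := prime_gt1 pp.
rewrite -mulr_natr ep; nia.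
Qed.


Definition indep (K L : fieldType) (iota : {rmorphism K -> L}) k (b : 'I_k -> L) :=
  forall c : 'I_k -> K, \sum_(i < k) iota (c i) * b i = 0 -> forall i, c i = 0.

Definition ext (K : Type) k (i : 'I_k.+1) (c : 'I_k -> K) (x0 : K) : 'I_k.+1 -> K :=
  fun j => match unlift i j with Some t => c t | None => x0 end.

Lemma sum_ext (K L : fieldType) (iota : {rmorphism K -> L}) k (i : 'I_k.+1)
   (b : 'I_k.+1 -> L) c x0 :
  \sum_(j < k.+1) iota (ext i c x0 j) * b j =
  iota x0 * b i + \sum_(t < k) iota (c t) * b (lift i t).
Proof.
rewrite (bigD1_ord i) //= /ext unlift_none; congr (_ + _).
by apply: eq_bigr => t _; rewrite liftK.
Qed.

Lemma unram_pow (K L : fieldType) (iota : {rmorphism K -> L}) vK vL m a :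
  unramified iota vK vL -> in_pow vK m a -> in_pow vL m (iota a).
Proof.
move=> hu; rewrite /in_pow; case: (eqVneq a 0) => [->|ha]; first by rewrite rmorph0 eqxx.
by rewrite hu // fmorph_eq0 (negPf ha).
Qed.

Lemma ppow (L : fieldType) (v : L -> int) (p : nat) (x : L) :
  normalized_dvaluation v -> prime p -> in_pow v 1 (p%:R : L) ->
  in_pow v 1 (x - 1) -> forall k, in_pow v (k.+1)%:Z (x ^+ (p ^ k) - 1).
Proof.
move=> hv pp hp hx; elim=> [|k ih]; first by rewrite expn0 expr1.
rewrite expnSr exprM.
have -> : x ^+ (p ^ k) = 1 + (x ^+ (p ^ k) - 1) by rewrite addrC subrK.
apply: (in_pow_le (b := k.+1%:Z + 1)); first lia.
by apply: pstep => //; lia.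
Qed.


Lemma coordC (K L : fieldType) (iota : {rmorphism K -> L}) (vK : K -> int) (vL : L -> int) :
  normalized_dvaluation vK -> normalized_dvaluation vL -> v_complete vK ->
  unramified iota vK vL -> forall k (b : 'I_k -> L), indep iota b ->
  forall m : int, exists M : nat, forall c : 'I_k -> K,
    in_pow vL M%:Z (\sum_(t < k) iota (c t) * b t) -> forall t, in_pow vK m (c t).
Proof.
move=> hK hL hcK hu; elim=> [|k IH] b hb m.
  by exists 0%N => c _; case.
suff per : forall i, exists M : nat, forall c : 'I_k.+1 -> K,
    in_pow vL M%:Z (\sum_(t < k.+1) iota (c t) * b t) -> in_pow vK m (c i).
  have mono : forall t (n n' : nat), (n <= n')%N -> (forall c : 'I_k.+1 -> K,
    in_pow vL n%:Z (\sum_(t < k.+1) iota (c t) * b t) -> in_pow vK m (c t)) ->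
    (forall c : 'I_k.+1 -> K,
    in_pow vL n'%:Z (\sum_(t < k.+1) iota (c t) * b t) -> in_pow vK m (c t)).
    by move=> t n n' le h c hc; apply: h; apply: (in_pow_le (b := n'%:Z)) => //; lia.
  have [M hM] := fin_bound mono per.
  by exists M => c hc t; apply: hM.
move=> i; apply: NNPP => hno.
have H : forall M : nat, exists c : 'I_k.+1 -> K,
    in_pow vL M%:Z (\sum_(t < k.+1) iota (c t) * b t) /\ ~~ in_pow vK m (c i).
  move=> M; apply: NNPP => hn; apply: hno; exists M => c hc.
  by case: (boolP (in_pow vK m (c i))) => // h; exfalso; apply: hn; exists c.
have H2 : forall j : nat, exists d : 'I_k.+1 -> K,
    d i = 1 /\ in_pow vL j%:Z (\sum_(t < k.+1) iota (d t) * b t).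
  move=> j; have [c [hc hci]] := H (j + `|m|)%N.
  have ci0 : c i != 0 by apply: contraNneq hci => ->; apply: in_pow0.
  have vci : vK (c i) < m by move: hci; rewrite /in_pow (negPf ci0) /= -ltNge.
  exists (fun t => c t / c i); split; first by rewrite mulfV.
  have -> : \sum_(t < k.+1) iota (c t / c i) * b t =
            iota (c i)^-1 * \sum_(t < k.+1) iota (c t) * b t.
    rewrite mulr_sumr; apply: eq_bigr => t _.
    by rewrite rmorphM /= fmorphV; rewrite [iota (c t) * _]mulrC -mulrA.
  apply: (in_pow_le (b := vK (c i)^-1 + (j + `|m|)%N%:Z)); last first.
    apply: in_powM => //; apply: unram_pow hu _; exact: in_pow_self.
  rewrite dvV //; lia.
have [d hd] := functional_choice _ H2.
pose e j t := d j (lift i t).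
pose b' t := b (lift i t).
pose u j := \sum_(t < k) iota (e j t) * b' t.
have hdsum : forall j, \sum_(t < k.+1) iota (d j t) * b t = b i + u j.
  move=> j; rewrite (bigD1_ord i) //= (proj1 (hd j)) rmorph1 mul1r.
  by congr (_ + _).
have hb' : indep iota b'.
  move=> c' hc' t; have := hb (ext i c' 0).
  rewrite sum_ext rmorph0 mul0r add0r => /(_ hc' (lift i t)).
  by rewrite /ext liftK.
have cauchy : forall t, exists f : K, forall m'' : nat, exists N : nat,
    forall j, (N <= j)%N -> in_pow vK m''%:Z (e j t - f).
  move=> t; apply: (hcK (fun j => e j t)) => m''.
  have [M'' hM''] := IH b' hb' m''%:Z.
  exists M'' => j j' hj hj'; apply: (hM'' (fun t0 => e j t0 - e j' t0) _ t).
  have -> : \sum_(t0 < k) iota (e j t0 - e j' t0) * b' t0 =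
            (b i + u j) - (b i + u j').
    rewrite opprD addrACA subrr add0r -sumrB; apply: eq_bigr => t0 _.
    by rewrite rmorphB mulrBl.
  rewrite -!hdsum; apply: in_powB => //.
    by apply: (in_pow_le (b := j%:Z)); [lia | exact: (proj2 (hd j))].
  by apply: (in_pow_le (b := j'%:Z)); [lia | exact: (proj2 (hd j'))].
have [f hf] := fin_all_exists cauchy.
pose z := b i + \sum_(t < k) iota (f t) * b' t.
have z0 : z = 0.
  apply: in_pow_all => mm.
  have monoB : forall t (n n' : nat), (n <= n')%N -> in_pow vL (- n%:Z) (b' t) ->
      in_pow vL (- n'%:Z) (b' t).
    by move=> t n n' le h; apply: (in_pow_le (b := (- n%:Z))) => //; lia.
  have exB : forall t, exists B : nat, in_pow vL (- B%:Z) (b' t).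
    by move=> t; exists `|vL (b' t)|%N; apply: (in_pow_le (b := vL (b' t))); [lia | exact: in_pow_self].
  have [B hB] := fin_bound monoB exB.
  have [N hN] := fin_bound (P := fun t N => forall j, (N <= j)%N ->
      in_pow vK (mm + B)%N%:Z (e j t - f t))
    (fun t n n' le h j hj => h j (leq_trans le hj)) (fun t => hf t (mm + B)%N).
  pose j := maxn N mm.
  have -> : z = (b i + u j) + \sum_(t < k) iota (f t - e j t) * b' t.
    rewrite /z /u -addrA; congr (_ + _); rewrite -big_split /=.
    apply: eq_bigr => t _; rewrite rmorphB mulrBl addrC subrK //.
  apply: (in_powD hL).
    rewrite -hdsum; apply: (in_pow_le (b := j%:Z)); first by rewrite lez_nat leq_maxr.
    exact: (proj2 (hd j)).
  apply: in_pow_sum => // t _.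
  apply: (in_pow_le (b := (mm + B)%N%:Z + - B%:Z)); first lia.
  apply: in_powM => //; apply: unram_pow hu _.
  rewrite -opprB; apply: in_powN => //; apply: hN; exact: leq_maxl.
have := hb (ext i f 1); rewrite sum_ext rmorph1 mul1r => /(_ z0 i).
by rewrite /ext unlift_none => /eqP; rewrite oner_eq0.
Qed.


Lemma cont (K L : fieldType) (iota : {rmorphism K -> L}) (vK : K -> int) (vL : L -> int) n :
  normalized_dvaluation vK -> normalized_dvaluation vL -> v_complete vK ->
  unramified iota vK vL -> ext_degree iota n ->
  forall s : {rmorphism L -> L}, (forall a, s (iota a) = iota a) ->
  forall m : int, exists M : nat, forall w, in_pow vL M%:Z w -> in_pow vL m (s w).
Proof.
move=> hK hL hcK hu [b hb] s hs m.
have ib : indep iota b.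
  move=> c hc i; have [c0 [_ h0]] := hb 0.
  rewrite (h0 c (esym hc)) -(h0 (fun _ => 0)) //.
  by rewrite big1 // => j _; rewrite rmorph0 mul0r.
have monoB : forall t (n n' : nat), (n <= n')%N -> in_pow vL (- n%:Z) (s (b t)) ->
    in_pow vL (- n'%:Z) (s (b t)).
  by move=> t n0 n' le h; apply: (in_pow_le (b := (- n0%:Z))) => //; lia.
have exB : forall t, exists B : nat, in_pow vL (- B%:Z) (s (b t)).
  by move=> t; exists `|vL (s (b t))|%N; apply: (in_pow_le (b := vL (s (b t)))); [lia | exact: in_pow_self].
have [B hB] := fin_bound monoB exB.
have [M hM] := coordC hK hL hcK hu ib (m + B%:Z).
exists M => w hw.
have [c [hc _]] := hb w.
move: hw; rewrite hc => hw.
rewrite rmorph_sum; apply: in_pow_sum => // t _.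
rewrite rmorphM /= hs.
apply: (in_pow_le (b := (m + B%:Z) + - B%:Z)); first lia.
apply: in_powM => //.
by apply: (unram_pow hu); apply: hM.
Qed.

Lemma charX (L M : fieldType) (chi : L -> M) x k : character chi -> x != 0 ->
  chi (x ^+ k.+1) = chi x ^+ k.+1.
Proof.
move=> [hM _] hx; elim: k => [|k ih]; first by rewrite !expr1.
by rewrite exprS hM ?expf_neq0 // ih -exprS.
Qed.

Lemma T1_neq0 (L : fieldType) (v : L -> int) x : normalized_dvaluation v -> in_T1 v x -> x != 0.
Proof.
move=> hv; rewrite /in_T1 /in_pow; case: (eqVneq x 0) => // ->.
by rewrite sub0r oppr_eq0 oner_eq0 /= dvN1.
Qed.

Lemma rou (C F : closedFieldType) (O : {pred C}) (r : C -> F) ell (a b : C) N :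
  ell_adic_coeffs O r ell -> a \in O -> b \in O -> b^-1 \in O -> b != 0 ->
  a ^+ N = 1 -> b ^+ N = 1 -> r a = r b -> ~~ (ell %| N)%N -> a = b.
Proof.
case=> _ hch [O1 OB OM _] [r1 rD rM] _ ha hb hbi b0 aN bN hr hN.
have O0 : 0 \in O by rewrite -(subrr 1) OB.
have OD : forall x y, x \in O -> y \in O -> x + y \in O.
  move=> x y hx hy; have -> : x + y = x - (0 - y) by rewrite sub0r opprK.
  by rewrite OB // OB.
have r0 : r 0 = 0 by apply: (@addrI _ (r 0)); rewrite -rD // !addr0.
have OX : forall y k, y \in O -> y ^+ k \in O.
  by move=> y k hy; elim: k => [|k ih]; rewrite ?expr0 // exprS OM.
have rX : forall y k, y \in O -> r (y ^+ k) = r y ^+ k.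
  by move=> y k hy; elim: k => [|k ih]; rewrite ?expr0 // !exprS rM ?OX // ih.
pose z := a * b^-1.
have zO : z \in O by rewrite OM.
have zN : z ^+ N = 1 by rewrite exprMn exprVn aN bN invr1 mulr1.
have rz : r z = 1 by rewrite rM // hr -rM // mulfV.
suff z1 : z = 1 by rewrite -(mulfVK b0 a) -/z z1 mul1r.
apply: NNPP => /eqP zn1.
have S0 : \sum_(i < N) z ^+ i = 0.
  have := subrX1 z N; rewrite zN subrr => /esym /eqP; rewrite mulf_eq0 subr_eq0.
  by rewrite (negPf zn1) => /eqP.
have rS : forall k, r (\sum_(i < k) z ^+ i) = k%:R.
  elim=> [|k ih]; first by rewrite big_ord0 r0.
  have Osum : forall k', \sum_(i < k') z ^+ i \in O.
    elim=> [|k' ih']; first by rewrite big_ord0.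
    by rewrite big_ord_recr /= OD // OX.
  by rewrite big_ord_recr /= rD ?Osum ?OX // ih rX // rz expr1n -[(k.+1)%:R]natr1.
move: (rS N); rewrite S0 r0 => /esym/eqP; rewrite -(dvdn_pcharf hch) => hd.
by rewrite hd in hN.
Qed.

Unset Implicit Arguments.


Theorem lemma3p7 (p ell n : nat) (K L : fieldType) (iota : {rmorphism K -> L})
    (vK : K -> int) (vL : L -> int)
    (C F : closedFieldType) (O : {pred C}) (r : C -> F) (theta : L -> C) :
  nonarch_local_field vK p -> nonarch_local_field vL p ->
  ext_degree iota n -> unramified iota vK vL ->
  prime ell -> ell != p -> ell_adic_coeffs O r ell ->
  smooth_character vL theta -> integral_character O theta ->
  (strongly_general_position iota vL theta <->
   strongly_general_position iota vL (fun x => r (theta x))).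
Proof.
move=> [pp hK hcK _] [_ hL _ [hpL _]] hdeg hu pl lp hC [hch [m hm]] hint.
split; last first.
  by move=> sgp s hs ht; apply: (sgp s hs) => x hx /=; rewrite ht.
move=> sgp s hs hr; apply: (sgp s hs) => x hx.
have x0 := T1_neq0 hL hx.
have sx0 : s x != 0 by rewrite fmorph_eq0.
have [M hM] := cont hK hL hcK hu hdeg (proj2 hs) m%:Z.
pose k := maxn M m.
have hxk := ppow hL pp hpL hx k.
have hp : ~~ (ell %| (p ^ k).-1.+1)%N.
  rewrite prednK ?expn_gt0 ?prime_gt0 // Euclid_dvdX // dvdn_prime2 //.
  by rewrite (negPf lp).
have hpos : (0 < p ^ k)%N by rewrite expn_gt0 prime_gt0.
have t1 : theta x ^+ (p ^ k).-1.+1 = 1.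
  rewrite -charX // prednK //; apply: hm; first by rewrite expf_neq0.
  by apply: (in_pow_le (b := k.+1%:Z)) => //; rewrite /k; lia.
have t2 : theta (s x) ^+ (p ^ k).-1.+1 = 1.
  rewrite -charX // prednK //; apply: hm; first by rewrite expf_neq0.
  rewrite -rmorphXn -(rmorph1 s) -rmorphB; apply: hM.
  by apply: (in_pow_le (b := k.+1%:Z)) => //; rewrite /k; lia.
have /andP [o1 o1'] := hint _ sx0.
have /andP [o2 o2'] := hint _ x0.
have tx0 : theta x != 0 by case: hch => _ ->.
exact: (rou hC o1 o2 o2' tx0 t2 t1 (hr x hx) hp).
Qed.
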